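(* Let $b=(\mu_1>\dots>\mu_l>0)\in\mathcal{Y}(0)$, $m=\mu_1$, $n=l$, assume $m>n$, and let $(i_{n+1}\ge i_{n+2}\ge\dots\ge i_m)$ be the conjugate partition of $\tilde b=(\mu_1-n,\mu_2-(n-1),\dots,\mu_l-1)$. For $0\le k\le m-n$ define a block $B_k$, a string of $L_k$ equal signs, where $L_k=i_{n+k}-i_{n+k+1}$ for $1\le k\le m-n-1$, $L_{m-n}=i_m$, and $L_0$ is specified below. Then the relevant $i$-signature of $b$ equals the concatenation $B_0B_1\cdots B_{m-n}$, as follows: (1) If $m,n$ are both even, the $0$-signature, and if $m,n$ are both odd, the $1$-signature, is given by $L_0=n+1-i_{n+1}$, with $B_k$ consisting of $+$ signs for $k$ even and $-$ signs for $k$ odd. (2) If $m$ is even and $n$ odd, the $0$-signature, and if $m$ is odd and $n$ even, the $1$-signature, is given by $L_0=n-i_{n+1}$, with $B_k$ consisting of $-$ signs for $k$ even and $+$ signs for $k$ odd. (3) If $m$ is odd and $n$ even, the $0$-signature, and if $m$ is even and $n$ odd, the $1$-signature, is given by $L_0=n+1-i_{n+1}$, with $B_k$ consisting of $+$ signs for $k$ even and $-$ signs for $k$ odd. (4) If $m,n$ are both odd, the $0$-signature, and if $m,n$ are both even, the $1$-signature, is given by $L_0=n-i_{n+1}$, with $B_k$ consisting of $-$ signs for $k$ even and $+$ signs for $k$ odd. (Blocks of length $0$ are empty.)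
   Context: A charged partition of charge $j\in\{0,1\}$ is a partition (possibly empty) whose Young diagram (rows numbered from the top, columns from the left) has the box in row $r$, column $c$ labelled $j-r+c\pmod 2$. $\mathcal{Y}(0)$ is the set of charge-$0$ charged partitions with distinct nonzero parts. A column is $i$-removable if its bottom box is labelled $i$ and removing it leaves a Young diagram; it is $i$-addable if a box labelled $i$ can be added at its bottom leaving a Young diagram. The $i$-signature is the string of signs obtained by scanning the columns from left to right, including the first empty column (column $\mu_1+1$), writing $+$ for each $i$-addable column, $-$ for each $i$-removable column, and nothing otherwise. *)

(* Defs.v *)
From mathcomp Require Import all_boot.
Set Implicit Arguments. Unset Strict Implicit. Unset Printing Implicit Defensive.

(* A partition is a seq nat listing its nonzero parts mu_1, mu_2, ... (rows
   numbered from 1, top to bottom; columns numbered from 1, left to right). *)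

(* mu_r, for r >= 1 (0 beyond the length). *)
Definition part (mu : seq nat) (r : nat) : nat := nth 0 mu r.-1.

Definition colheight (mu : seq nat) (c : nat) : nat := count (fun x => c <= x) mu.

(* label of box (r, c) in a charged partition of charge j:
   (j - r + c) mod 2, written as (j + r + c) mod 2 since -r = r mod 2. *)
Definition label (j r c : nat) : nat := (j + r + c) %% 2.

(* Y(0): charge-0 charged partitions with distinct nonzero parts
   (the charge is fixed to 0 by the use of [label 0] below). *)
Definition inY0 (mu : seq nat) : bool := sorted gtn mu && all (fun x => 0 < x) mu.

Definition removable (j i : nat) (mu : seq nat) (c : nat) : bool :=
  [&& 0 < colheight mu c,
      label j (colheight mu c) c == i &
      part mu (colheight mu c) == c].

(* column c is i-addable (charge j): the box (colheight c + 1, c) is labelled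
   i and adding it gives a Young diagram *)
Definition addable (j i : nat) (mu : seq nat) (c : nat) : bool :=
  (label j (colheight mu c).+1 c == i) &&
  ((c == 1) || (colheight mu c < colheight mu c.-1)).

Inductive sign := Plus | Minus.

Definition signature (j i : nat) (mu : seq nat) : seq sign :=
  flatten [seq (if addable j i mu c then [:: Plus] else [::]) ++
               (if removable j i mu c then [:: Minus] else [::])
          | c <- iota 1 (part mu 1).+1].

(* With n = size mu, btilde = (mu_1 - n, mu_2 - (n-1), ..., mu_n - 1);
   [itilde mu t] is i_t, the (t-n)-th part of the conjugate of btilde,
   i.e. #{ r in 1..n | mu_r - (n - r + 1) >= t - n }, for n+1 <= t <= m. *)
Definition itilde (mu : seq nat) (t : nat) : nat :=
  let n := size mu in
  count (fun r => t - n <= part mu r - (n - r + 1)) (iota 1 n).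

Definition blen (mu : seq nat) (L0 k : nat) : nat :=
  let m := part mu 1 in let n := size mu in
  if k == 0 then L0
  else if k == m - n then itilde mu m
  else itilde mu (n + k) - itilde mu (n + k + 1).

Definition blocks (mu : seq nat) (L0 : nat) (s_even s_odd : sign) : seq sign :=
  let m := part mu 1 in let n := size mu in
  flatten [seq nseq (blen mu L0 k) (if odd k then s_odd else s_even)
          | k <- iota 0 (m - n).+1].

(* Main.v *)
Require Import Defs.
From mathcomp Require Import all_boot.
From mathcomp Require Import zify.
Set Implicit Arguments. Unset Strict Implicit.

Lemma inY0_cons x s : inY0 (x :: s) -> [/\ inY0 s, 0 < x & part s 1 < x].
Proof.
rewrite /inY0 /= => /andP[Hs /andP[Hx Ha]].
rewrite (path_sorted Hs) Ha Hx; split=> //.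
by case: s Hs {Ha} => [|z s] //= /andP[].
Qed.

Lemma colh_cons x s c : colheight (x :: s) c = (c <= x) + colheight s c.
Proof. by []. Qed.

Lemma colh_big s c : inY0 s -> part s 1 < c -> colheight s c = 0.
Proof.
elim: s => [|x s IH] // H Hc.
case/inY0_cons: H => Hs _ Hy.
rewrite /part /= in Hc; rewrite colh_cons IH //; last by lia.
have : ~~ (c <= x) by rewrite -ltnNge.
by move/negbTE => ->.
Qed.

Lemma colh_pos s c : 0 < c -> c <= part s 1 -> 0 < colheight s c.
Proof.
case: s => [|x s] Hc; rewrite /part /=; first lia.
move=> H; rewrite /colheight /= H; lia.
Qed.

Lemma size_le s : inY0 s -> size s <= part s 1.
Proof.
elim: s => [|x s IH] //= H.
case/inY0_cons: H => Hs _ Hy. have := IH Hs. rewrite /part /=. lia.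
Qed.

Definition col j i s c := (if addable j i s c then [:: Plus] else [::]) ++
  (if removable j i s c then [:: Minus] else [::]).

Lemma col_low j i x s c : inY0 (x :: s) -> 0 < c <= part s 1 ->
  col j i (x :: s) c = col j.+1 i s c.
Proof.
case/inY0_cons => Hs Hx Hy /andP[Hc0 Hcy].
have E1 : colheight (x :: s) c = (colheight s c).+1.
  by rewrite colh_cons (_ : c <= x) //; lia.
have E2 : colheight (x :: s) c.-1 = (colheight s c.-1).+1.
  by rewrite colh_cons (_ : c.-1 <= x) //; lia.
have Hp := @colh_pos s c Hc0 Hcy.
rewrite /col /addable /removable E1 E2 ltnS.
case E: (colheight s c) Hp => [|h] // _.
have L : forall r, label j r.+1 c = label j.+1 r c by move=> r; rewrite /label addSnnS.
by rewrite (L h.+2) (L h.+1).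
Qed.

Lemma col_y1 j i x s : inY0 (x :: s) ->
  col j i (x :: s) (part s 1).+1 =
  (if label j.+1 1 (part s 1).+1 == i then [:: Plus] else [::]) ++
  (if (x == (part s 1).+1) && (label j 1 x == i) then [:: Minus] else [::]).
Proof.
move=> H; have [Hs Hx Hy] := inY0_cons H.
set y := part s 1 in Hy *.
have E1 : colheight (x :: s) y.+1 = 1.
  by rewrite colh_cons (colh_big Hs (ltnSn _)) (_ : y < x).
have E2 : (y.+1 == 1) || (1 < colheight (x :: s) y).
  case Ey: y Hy E1 => [|y'] // Hy _.
  have Hp : 0 < colheight s y'.+1 by apply: colh_pos; rewrite // -Ey.
  rewrite colh_cons (_ : y'.+1 <= x) ?(ltnW Hy) //=; lia.
rewrite /col /addable /removable E1 E2 andbT /=.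
rewrite /label /part /= addSnnS.
by case: (eqVneq x y.+1) => [->|Hne]; rewrite ?andbT ?andbF.
Qed.

Lemma col_mid j i x s c : inY0 (x :: s) -> (part s 1).+1 < c -> c <= x.+1 ->
  col j i (x :: s) c =
  (if (c == x.+1) && (label j 1 x.+1 == i) then [:: Plus] else [::]) ++
  (if (c == x) && (label j 1 x == i) then [:: Minus] else [::]).
Proof.
move=> H Hc1 Hc2; have [Hs Hx Hy] := inY0_cons H.
have E1 : colheight (x :: s) c = (c <= x).
  by rewrite colh_cons (colh_big Hs) ?addn0 //; lia.
have E2 : colheight (x :: s) c.-1 = 1.
  by rewrite colh_cons (colh_big Hs) ?addn0 //; [rewrite (_ : c.-1 <= x) //|]; lia.
have Hc1' : (c == 1) = false by apply/eqP; lia.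
rewrite /col /addable /removable E1 E2 Hc1' /=.
case: (ltngtP c x.+1) Hc2 => // [Hlt|->] _.
  rewrite ltnS in Hlt; rewrite Hlt /= /part /=.
  by case: (eqVneq x c) => [->|Hne]; rewrite ?eqxx ?andbT ?andbF // eq_sym (negbTE Hne) andbF.
rewrite ltnn /= andbT.
have -> : (x.+1 == x) = false by apply/eqP; lia.
by [].
Qed.

Lemma col_top j i s : inY0 s ->
  col j i s (part s 1).+1 = (if label j 1 (part s 1).+1 == i then [:: Plus] else [::]).
Proof.
move=> Hs. set y := part s 1.
have E1 : colheight s y.+1 = 0 by apply: colh_big.
have E2 : (y.+1 == 1) || (0 < colheight s y).
  case Ey: y => [|y'] //=. apply: colh_pos; rewrite // -Ey; exact: leqnn.
by rewrite /col /addable /removable E1 E2 andbT /= cats0.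
Qed.

Lemma flatten_nil (T : Type) (F : nat -> seq T) a k :
  (forall c, a <= c < a + k -> F c = [::]) -> flatten [seq F c | c <- iota a k] = [::].
Proof.
elim: k a => [|k IH] a //= H.
rewrite H ?IH //; [move=> c Hc; apply: H|]; lia.
Qed.

Lemma flatten_cons' (T : Type) (a : seq T) l : flatten (a :: l) = a ++ flatten l.
Proof. by []. Qed.

Lemma sig_cons j i x s : inY0 (x :: s) ->
  signature j i (x :: s) = signature j.+1 i s ++
   (if label j 1 x == i then [:: Minus] else [::]) ++
   (if label j 1 x.+1 == i then [:: Plus] else [::]).
Proof.
move=> H; have [Hs Hx Hy] := inY0_cons H.
have Esig : forall j i s, signature j i s =
  flatten [seq col j i s c | c <- iota 1 (part s 1).+1] by [].
rewrite !Esig (_ : part (x :: s) 1 = x) //.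
set y := part s 1 in Hy *.
have -> : iota 1 x.+1 = iota 1 y ++ iota y.+1 (x - y).+1.
  rewrite {1}(_ : x.+1 = y + (x - y).+1); [by rewrite (iotaD 1 y)|lia].
have -> : iota 1 y.+1 = iota 1 y ++ [:: y.+1].
  by rewrite (_ : y.+1 = y + 1) ?iotaD // addn1.
rewrite !map_cat !flatten_cat -catA.
have -> : [seq col j i (x :: s) c | c <- iota 1 y] = [seq col j.+1 i s c | c <- iota 1 y].
  apply/eq_in_map => c; rewrite mem_iota => Hc; apply: col_low => //; lia.
congr (_ ++ _).
rewrite [iota y.+1 _]/= [map _ (_ :: _)]/= [flatten [:: _]]/= col_y1 // col_top // -/y flatten_cons' cats0 -!catA.
congr (_ ++ _).
have -> : [seq col j i (x :: s) c | c <- iota y.+2 (x - y)] = [seq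
  (if (c == x.+1) && (label j 1 x.+1 == i) then [:: Plus] else [::]) ++
  (if (c == x) && (label j 1 x == i) then [:: Minus] else [::]) | c <- iota y.+2 (x - y)].
  apply/eq_in_map => c; rewrite mem_iota => Hc; apply: col_mid => //; rewrite -/y; lia.
case: (eqVneq x y.+1) => [Ex|Hne].
  rewrite Ex subSnn /= eqxx /=.
  have -> : (y.+2 == y.+1) = false by apply/eqP; lia.
  by rewrite /= !cats0.
rewrite /=.
rewrite (_ : x - y = (x - y.+2) + 2); last by lia.
rewrite iotaD map_cat flatten_cat flatten_nil; last first.
  move=> c Hc.
  have -> : (c == x.+1) = false by apply/eqP; lia.
  have -> : (c == x) = false by apply/eqP; lia.
  by [].
have -> : y.+2 + (x - y.+2) = x by lia.
have E1 : (x == x.+1) = false by apply/eqP; lia.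
have E2 : (x.+1 == x) = false by apply/eqP; lia.
rewrite [iota _ 2]/= [map _ _]/= !eqxx E1 E2 /=.
by rewrite !cats0.
Qed.


Fixpoint btl (s : seq nat) : seq nat :=
  if s is x :: s' then btl s' ++ [:: x - size s] else [::].

Definition G N i b := (if (N + b + 1) %% 2 == i then [:: Minus] else [::]) ++
  (if (N + b) %% 2 == i then [:: Plus] else [::]).

Lemma sig_nil j i : signature j i [::] = (if label j 0 2 == i then [:: Plus] else [::]).
Proof.
have -> : signature j i [::] = col j i [::] 1 ++ [::] by [].
rewrite cats0 /col /addable /removable (_ : colheight [::] 1 = 0) // eqxx andbT cats0.
by rewrite /label (_ : j + 1 + 1 = j + 0 + 2) //; lia.
Qed.

Lemma sig_closed i s : inY0 s -> forall j, signature j i s =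
  (if label j (size s) 2 == i then [:: Plus] else [::]) ++
  flatten [seq G (j + size s) i b | b <- btl s].
Proof.
elim: s => [|x s IH] H j.
  by rewrite sig_nil cats0.
have [Hs Hx Hy] := inY0_cons H.
have Hsz := size_le H.
rewrite sig_cons // IH //.
have -> : btl (x :: s) = btl s ++ [:: x - size (x :: s)] by [].
rewrite map_cat flatten_cat.
have -> : label j.+1 (size s) 2 = label j (size (x :: s)) 2.
  by rewrite /label; congr (_ %% _); rewrite /=; lia.
have -> : j.+1 + size s = j + size (x :: s) by rewrite /=; lia.
rewrite -!catA; congr (_ ++ (_ ++ _)).
have -> : [seq G (j + size (x :: s)) i b | b <- [:: x - size (x :: s)]] =
  [:: G (j + size (x :: s)) i (x - size (x :: s))] by [].
rewrite flatten_cons' cats0 /G /label.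
rewrite /part in Hsz.
have -> : j + size (x :: s) + (x - size (x :: s)) = j + x.
  by move: Hsz; rewrite [size _]/= [nth _ _ _]/=; lia.
have -> : j + 1 + x = j + x + 1 by lia.
by rewrite (_ : j + 1 + x.+1 = j + x + 2) ?modnDr //; lia.
Qed.

Lemma fmap_cons (T : Type) (F : nat -> seq T) y t :
  flatten (map F (y :: t)) = F y ++ flatten (map F t).
Proof. by []. Qed.

Lemma map_sorted_blocks (T : Type) (f : nat -> T) (s : seq nat) a K :
  sorted leq s -> all (fun b => a <= b <= a + K) s ->
  map f s = flatten [seq nseq (count_mem k s) (f k) | k <- iota a K.+1].
Proof.
elim: s a K => [|x s IH] a K Hs Ha.
  by rewrite flatten_nil.
have Hall : all (leq x) s by move: Hs; rewrite /= (path_sortedE leq_trans) => /andP[].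
have Hs' : sorted leq s by apply: path_sorted Hs.
case/andP: Ha => /andP[Hax HxK] Ha.
have -> : iota a K.+1 = iota a (x - a) ++ x :: iota x.+1 (a + K - x).
  rewrite (_ : K.+1 = (x - a) + (a + K - x).+1); last by lia.
  by rewrite iotaD (_ : a + (x - a) = x) //; lia.
rewrite map_cat flatten_cat flatten_nil; last first.
  move=> c Hc; rewrite (_ : count_mem c (x :: s) = 0) //.
  apply/count_memPn; rewrite inE negb_or; apply/andP; split; first by apply/eqP; lia.
  apply/negP => /(allP Hall); lia.
rewrite cat0s fmap_cons map_cons.
have -> : [seq nseq (count_mem k (x :: s)) (f k) | k <- iota x.+1 (a + K - x)] =
          [seq nseq (count_mem k s) (f k) | k <- iota x.+1 (a + K - x)].
  apply/eq_in_map => k; rewrite mem_iota => Hk.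
  by rewrite [count _ (_ :: _)]/= (_ : (x == k) = false) //; apply/eqP; lia.
rewrite (_ : count_mem x (x :: s) = 1 + count_mem x s); last by rewrite /= eqxx.
rewrite nseqD -catA; congr (_ :: _).
rewrite (IH x (a + K - x) Hs'); last first.
  apply/allP => b Hb; have := allP Hall b Hb; have := allP Ha b Hb; lia.
by [].
Qed.

Lemma flatten_single (T : Type) (g : nat -> T) (l : seq nat) :
  flatten [seq [:: g b] | b <- l] = map g l.
Proof. by elim: l => //= b l ->. Qed.

Lemma size_btl s : size (btl s) = size s.
Proof. by elim: s => //= x s IH; rewrite size_cat IH addn1. Qed.

Lemma btl_bound s : inY0 s -> all (fun b => b <= part s 1 - size s) (btl s).
Proof.
elim: s => // x s IH H.
have [Hs Hx Hy] := inY0_cons H.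
have Hsz := size_le Hs.
rewrite [btl _]/= all_cat /= andbT.
apply/andP; split; last by rewrite /part /=.
apply/allP => b Hb; have := allP (IH Hs) b Hb; rewrite /part /= in Hy Hsz *.
rewrite /part /= in Hsz; lia.
Qed.

Lemma btl_sorted s : inY0 s -> sorted leq (btl s).
Proof.
elim: s => // x s IH H.
have [Hs Hx Hy] := inY0_cons H.
have Hb := btl_bound Hs.
have Hsz := size_le Hs.
rewrite [btl _]/=.
move: (IH Hs) Hb; case: (btl s) => // a l Hso Hall.
move: Hso; rewrite cats1 [rcons _ _]/= [sorted _ (_ :: _)]/= [sorted _ (_ :: _)]/= rcons_path => -> /=.
have := allP Hall _ (mem_last a l); rewrite /part /= in Hy Hsz *; lia.
Qed.

Lemma btl_count (p : pred nat) s : count p (btl s) =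
  count (fun r => p (part s r - (size s - r + 1))) (iota 1 (size s)).
Proof.
elim: s => // x s IH.
rewrite [btl _]/= count_cat IH /= addn0 addnC.
have -> : part (x :: s) 1 - ((size s).+1 - 1 + 1) = x - (size s).+1.
  by rewrite (_ : (size s).+1 - 1 + 1 = (size s).+1) //; lia.
congr (_ + _).
rewrite -[2]/(1 + 1) iotaDl count_map; apply: eq_in_count => r; rewrite mem_iota => Hr.
rewrite /preim /= /part (_ : (1 + r).-1 = r.-1.+1); last by lia.
by rewrite /= (_ : (size s).+1 - (1 + r) + 1 = size s - r + 1) //; lia.
Qed.

Lemma cnt_split k (l : seq nat) :
  count (fun b => k <= b) l = count (pred1 k) l + count (fun b => k < b) l.
Proof.
elim: l => // b l IH; rewrite /= IH.
case: (ltngtP k b) => H /=; rewrite ?(eq_sym b) ?eqxx; try lia.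
Qed.

Lemma count_big K (l : seq nat) : all (fun b => b <= K) l -> count (fun b => K < b) l = 0.
Proof. by elim: l => // b l IH /= /andP[Hb Hl]; rewrite IH // addn0 ltnNge Hb. Qed.

Lemma itilde_btl mu t : itilde mu t = count (fun b => t - size mu <= b) (btl mu).
Proof. by rewrite btl_count. Qed.

Lemma main_gen i mu L0 se so : inY0 mu -> i < 2 ->
  L0 = ((size mu + 2) %% 2 == i) + count (pred1 0) (btl mu) ->
  (((size mu + 2) %% 2 == i) -> se = Plus) ->
  se = (if (size mu + 1) %% 2 == i then Minus else Plus) ->
  so = (if (size mu + 2) %% 2 == i then Minus else Plus) ->
  signature 0 i mu = blocks mu L0 se so.
Proof.
move=> H Hi HL Hse1 Hse Hso.
set n := size mu in HL Hse1 Hse Hso *.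
set m := part mu 1.
set sgn := fun k => if odd k then so else se.
have HG : forall b, G n i b = [:: sgn b].
  move=> b; rewrite /G /sgn Hse Hso !modn2 !oddD.
  by case: i Hi {HL Hse1 Hse Hso} => [|[|]] // _; case: (odd n); case: (odd b).
rewrite sig_closed // add0n (eq_map HG) flatten_single.
rewrite (@map_sorted_blocks _ sgn _ 0 (m - n)); first last.
- apply/allP => b Hb; have := allP (btl_bound H) b Hb; rewrite -/m -/n; lia.
- exact: btl_sorted.
rewrite /blocks -/m -/n [iota 0 _]/= !fmap_cons.
rewrite {1}/blen eqxx HL nseqD -catA; congr (_ ++ _).
  by case: (_ == i) Hse1 => // ->.
congr (_ ++ _); congr flatten; apply/eq_in_map => k; rewrite mem_iota => Hk.
rewrite /sgn; congr nseq.
rewrite /blen -/m -/n (_ : (k == 0) = false); last by apply/eqP; lia.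
case: eqP => Hkm.
  rewrite itilde_btl -/n -/m -Hkm cnt_split count_big ?addn0 //.
  apply/allP => b Hb; have := allP (btl_bound H) b Hb; rewrite -/m -/n; lia.
rewrite !itilde_btl -/n (_ : n + k - n = k); last by lia.
rewrite (_ : n + k + 1 - n = k.+1); last by lia.
by rewrite cnt_split addnK.
Qed.

Lemma L0_facts mu : inY0 mu ->
  size mu - itilde mu (size mu + 1) = count (pred1 0) (btl mu) /\
  size mu + 1 - itilde mu (size mu + 1) = 1 + count (pred1 0) (btl mu).
Proof.
move=> H; rewrite itilde_btl (_ : size mu + 1 - size mu = 1); last by lia.
have := cnt_split 0 (btl mu).
rewrite (eq_count (a2 := predT)) // count_predT size_btl.
move=> E; rewrite [in size mu - _]E [in size mu + 1 - _]E; split; lia.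
Qed.

Theorem mainTheorem9 (mu : seq nat) :
  inY0 mu ->
  let m := part mu 1 in
  let n := size mu in
  n < m ->
  (
   (* (1) *)
   (~~ odd m -> ~~ odd n ->
      signature 0 0 mu = blocks mu (n + 1 - itilde mu (n + 1)) Plus Minus) /\
   (odd m -> odd n ->
      signature 0 1 mu = blocks mu (n + 1 - itilde mu (n + 1)) Plus Minus) /\
   (* (2) *)
   (~~ odd m -> odd n ->
      signature 0 0 mu = blocks mu (n - itilde mu (n + 1)) Minus Plus) /\
   (odd m -> ~~ odd n ->
      signature 0 1 mu = blocks mu (n - itilde mu (n + 1)) Minus Plus) /\
   (* (3) *)
   (odd m -> ~~ odd n ->
      signature 0 0 mu = blocks mu (n + 1 - itilde mu (n + 1)) Plus Minus) /\
   (~~ odd m -> odd n ->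
      signature 0 1 mu = blocks mu (n + 1 - itilde mu (n + 1)) Plus Minus) /\
   (* (4) *)
   (odd m -> odd n ->
      signature 0 0 mu = blocks mu (n - itilde mu (n + 1)) Minus Plus) /\
   (~~ odd m -> ~~ odd n ->
      signature 0 1 mu = blocks mu (n - itilde mu (n + 1)) Minus Plus)).
Proof.
move=> H m n _.
have [F0 F1] := L0_facts H.
rewrite -/n in F0 F1.
have P : forall i, i < 2 -> forall L0 se so, 
  L0 = ((n + 2) %% 2 == i) + count (pred1 0) (btl mu) ->
  (((n + 2) %% 2 == i) -> se = Plus) ->
  se = (if (n + 1) %% 2 == i then Minus else Plus) ->
  so = (if (n + 2) %% 2 == i then Minus else Plus) ->
  signature 0 i mu = blocks mu L0 se so.
  by move=> i Hi L0 se so; apply: main_gen.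
rewrite !modn2 !oddD /= in P.
split; [|split; [|split; [|split; [|split; [|split; [|split]]]]]] => _ Hn;
  (apply: P => //; rewrite ?F0 ?F1 ?addbT ?addbF;
   first [rewrite Hn | rewrite (negbTE Hn)]; by []).
Qed.
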